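(* In $\mathcal{H}eis_k$, with $\tau,c',d',x'$ as in the context, the following relations hold: $\tau\circ(x'\otimes 1_\uparrow)-(1_\uparrow\otimes x')\circ\tau=c'\circ d'$, $\quad\tau\circ(1_\downarrow\otimes x)-(x\otimes 1_\downarrow)\circ\tau=c'\circ d'$, $d'\circ(1_\downarrow\otimes x)=d'\circ(x'\otimes 1_\uparrow)$, $\quad(x\otimes 1_\downarrow)\circ c'=(1_\uparrow\otimes x')\circ c'$.
   Context: Fix a commutative ring $\Bbbk$ and an integer $k$. In a strict monoidal category write $\mathbf 1$ for the unit object, $1_X$ for the identity, $a\circ b$ for composition, $a\otimes b$ for tensor product, $x^n$ for the $n$-fold composite. The Heisenberg category $\mathcal{H}eis_k$ is the strict $\Bbbk$-linear monoidal category generated by objects $\uparrow,\downarrow$ and morphisms $x:\uparrow\to\uparrow$, $s:\uparrow\otimes\uparrow\to\uparrow\otimes\uparrow$, $c:\mathbf 1\to\downarrow\otimes\uparrow$, $d:\uparrow\otimes\downarrow\to\mathbf 1$, subject to the following relations, where $t:=(1_\downarrow\otimes 1_\uparrow\otimes d)\circ(1_\downarrow\otimes s\otimes 1_\downarrow)\circ(c\otimes 1_\uparrow\otimes 1_\downarrow):\uparrow\otimes\downarrow\to\downarrow\otimes\uparrow$: (H) $s\circ s=1_{\uparrow\otimes\uparrow}$; $(s\otimes 1_\uparrow)\circ(1_\uparrow\otimes s)\circ(s\otimes 1_\uparrow)=(1_\uparrow\otimes s)\circ(s\otimes 1_\uparrow)\circ(1_\uparrow\otimes s)$; $(x\otimes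 1_\uparrow)\circ s-s\circ(1_\uparrow\otimes x)=1_{\uparrow\otimes\uparrow}$. (A) $(d\otimes 1_\uparrow)\circ(1_\uparrow\otimes c)=1_\uparrow$ and $(1_\downarrow\otimes d)\circ(c\otimes 1_\downarrow)=1_\downarrow$. (I) If $k\ge0$, the morphism $\uparrow\otimes\downarrow\to(\downarrow\otimes\uparrow)\oplus\mathbf 1^{\oplus k}$ with components $t$ and $d\circ(x^r\otimes 1_\downarrow)$, $r=0,\dots,k-1$, is an isomorphism in the additive envelope; if $k<0$, the morphism $(\uparrow\otimes\downarrow)\oplus\mathbf 1^{\oplus(-k)}\to\downarrow\otimes\uparrow$ with components $t$ and $(1_\downarrow\otimes x^r)\circ c$, $r=0,\dots,-k-1$, is an isomorphism in the additive envelope (formally, the entries of a two-sided inverse matrix are adjoined as generators). If $k\ge0$ the inverse in (I) has components $\tau:\downarrow\otimes\uparrow\to\uparrow\otimes\downarrow$ and $e_r:\mathbf 1\to\uparrow\otimes\downarrow$ ($0\le r<k$); if $k<0$ it has components $\tau:\downarrow\otimes\uparrow\to\uparrow\otimes\downarrow$ and $f_r:\downarrow\otimes\uparrow\to\mathbf 1$ ($0\le r<-k$). Set $c':=-e_{k-1}$ if $k>0$, $c':=\tau\circ(1_\downarrow\otimes x^{-k})\circ c$ if $k\le0$; $d':=d\circ(x^k\otimes1_\downarrow)\circ\tau$ if $k\ge0$, $d':=f_{-k-1}$ if $k<0$. Let $x':=(1_\downarrow\otimes d)\circ(1_\downarrow\otimes x\otimes 1_\downarrow)\circ(c\otimes 1_\downarrow):\downarrow\to\downarrow$.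 *)

(* Defs.v *)
From HB Require Import structures.
From mathcomp Require Import all_boot all_algebra.
Set Implicit Arguments. Unset Strict Implicit. Unset Printing Implicit Defensive.
Import GRing.Theory.
Local Open Scope ring_scope.

Definition obj := seq bool.
Definition up : obj := [:: true].
Definition dn : obj := [:: false].
Definition unit_obj : obj := [::].

Definition castH (H : obj -> obj -> Type) (A A' B B' : obj)
  (eA : A = A') (eB : B = B') (f : H A B) : H A' B' :=
  match eA in _ = X, eB in _ = Y return H X Y with erefl, erefl => f end.

(* A strict R-linear monoidal category whose monoid of objects is the free
   monoid on {up, down} (as is the case for Heis_k). *)
Record smcat (R : comPzRingType) := SMCat {
  mor : obj -> obj -> lmodType R;
  mcomp : forall A B C, mor B C -> mor A B -> mor A C;
  mid : forall A, mor A A;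
  mtens : forall A B C D, mor A B -> mor C D -> mor (A ++ C) (B ++ D);
  compA : forall A B C D (f : mor C D) (g : mor B C) (h : mor A B),
    mcomp f (mcomp g h) = mcomp (mcomp f g) h;
  comp1m : forall A B (f : mor A B), mcomp (mid B) f = f;
  compm1 : forall A B (f : mor A B), mcomp f (mid A) = f;
  compDl : forall A B C (f f' : mor B C) (g : mor A B),
    mcomp (f + f') g = mcomp f g + mcomp f' g;
  compDr : forall A B C (f : mor B C) (g g' : mor A B),
    mcomp f (g + g') = mcomp f g + mcomp f g';
  compZl : forall A B C (a : R) (f : mor B C) (g : mor A B),
    mcomp (a *: f) g = a *: mcomp f g;
  compZr : forall A B C (a : R) (f : mor B C) (g : mor A B),
    mcomp f (a *: g) = a *: mcomp f g;
  tensDl : forall A B C D (f f' : mor A B) (g : mor C D),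
    mtens (f + f') g = mtens f g + mtens f' g;
  tensDr : forall A B C D (f : mor A B) (g g' : mor C D),
    mtens f (g + g') = mtens f g + mtens f g';
  tensZl : forall A B C D (a : R) (f : mor A B) (g : mor C D),
    mtens (a *: f) g = a *: mtens f g;
  tensZr : forall A B C D (a : R) (f : mor A B) (g : mor C D),
    mtens f (a *: g) = a *: mtens f g;
  tens_comp : forall A B C A' B' C' (f : mor B C) (f' : mor A B)
      (g : mor B' C') (g' : mor A' B'),
    mcomp (mtens f g) (mtens f' g') = mtens (mcomp f f') (mcomp g g');
  tens_id : forall A B, mtens (mid A) (mid B) = mid (A ++ B);
  tensA : forall A B C D E F (f : mor A B) (g : mor C D) (h : mor E F),
    mtens (mtens f g) h =
    castH (H := fun X Y => mor X Y : Type) (catA A C E) (catA B D F)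
      (mtens f (mtens g h));
  tens1l : forall A B (f : mor A B), mtens (mid unit_obj) f = f;
  tens1r : forall A B (f : mor A B),
    mtens f (mid unit_obj) =
    castH (H := fun X Y => mor X Y : Type) (esym (cats0 A)) (esym (cats0 B)) f
}.

Arguments mcomp {R} s {A B C} _ _.
Arguments mid {R} s A.
Arguments mtens {R} s {A B C D} _ _.

Section Heis.
Variables (R : comPzRingType) (C : smcat R).

Definition powm (A : obj) (f : mor C A A) (n : nat) : mor C A A :=
  iter n (mcomp C f) (mid C A).

Variables (x : mor C up up) (s : mor C (up ++ up) (up ++ up))
  (c : mor C unit_obj (dn ++ up)) (d : mor C (up ++ dn) unit_obj).

Definition heis_t : mor C (up ++ dn) (dn ++ up) :=
  mcomp C (mtens C (mid C dn) (mtens C (mid C up) d))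
    (mcomp C (mtens C (mid C dn) (mtens C s (mid C dn)))
       (mtens C c (mtens C (mid C up) (mid C dn)))).

Definition heis_x' : mor C dn dn :=
  mcomp C (mtens C (mid C dn) d)
    (mcomp C (mtens C (mid C dn) (mtens C x (mid C dn))) (mtens C c (mid C dn))).

Variables (tau : mor C (dn ++ up) (up ++ dn))
  (e : nat -> mor C unit_obj (up ++ dn))
  (f : nat -> mor C (dn ++ up) unit_obj).

(* Relations (H), (A), (I) of Heis_k, where for k >= 0 the entries of the
   inverse in (I) are tau and e_r (r < k), and for k < 0 they are tau and
   f_r (r < -k).  Note Negz m = -(m+1). *)
Definition heis_rels (k : int) : Prop :=
  [/\ mcomp C s s = mid C (up ++ up),
      mcomp C (mtens C s (mid C up)) (mcomp C (mtens C (mid C up) s) (mtens C s (mid C up)))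
      = mcomp C (mtens C (mid C up) s) (mcomp C (mtens C s (mid C up)) (mtens C (mid C up) s)),
      mcomp C (mtens C x (mid C up)) s - mcomp C s (mtens C (mid C up) x) = mid C (up ++ up),
      mcomp C (mtens C d (mid C up)) (mtens C (mid C up) c) = mid C up &
      mcomp C (mtens C (mid C dn) d) (mtens C c (mid C dn)) = mid C dn] /\
      match k with
      | Posz n =>
        [/\ mcomp C tau heis_t
            + \sum_(r < n) mcomp C (e r) (mcomp C d (mtens C (powm x r) (mid C dn)))
            = mid C (up ++ dn),
          mcomp C heis_t tau = mid C (dn ++ up),
          forall r, (r < n)%N -> mcomp C heis_t (e r) = 0,
          forall r, (r < n)%N ->
            mcomp C (mcomp C d (mtens C (powm x r) (mid C dn))) tau = 0 &
          forall r r', (r < n)%N -> (r' < n)%N ->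
            mcomp C (mcomp C d (mtens C (powm x r) (mid C dn))) (e r')
            = if r == r' then mid C unit_obj else 0]
      | Negz m =>
        [/\ mcomp C heis_t tau
            + \sum_(r < m.+1) mcomp C (mcomp C (mtens C (mid C dn) (powm x r)) c) (f r)
            = mid C (dn ++ up),
          mcomp C tau heis_t = mid C (up ++ dn),
          forall r, (r < m.+1)%N ->
            mcomp C tau (mcomp C (mtens C (mid C dn) (powm x r)) c) = 0,
          forall r, (r < m.+1)%N -> mcomp C (f r) heis_t = 0 &
          forall r r', (r < m.+1)%N -> (r' < m.+1)%N ->
            mcomp C (f r) (mcomp C (mtens C (mid C dn) (powm x r')) c)
            = if r == r' then mid C unit_obj else 0]
      end.

Definition heis_c' (k : int) : mor C unit_obj (up ++ dn) :=
  if (0 < k)%R then - e (absz k).-1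
  else mcomp C tau (mcomp C (mtens C (mid C dn) (powm x (absz k))) c).

Definition heis_d' (k : int) : mor C (dn ++ up) unit_obj :=
  if (0 <= k)%R then mcomp C d (mcomp C (mtens C (powm x (absz k)) (mid C dn)) tau)
  else f (absz k).-1.

End Heis.

(* Main.v *)
Require Import Defs.
From HB Require Import structures.
From mathcomp Require Import all_boot all_algebra.
Import GRing.Theory.
Local Open Scope ring_scope.

Lemma castHE (R : comPzRingType) (C : smcat R) (A B : obj) (eA : A = A) (eB : B = B)
  (g : mor C A B) : castH (H := fun X Y => mor C X Y : Type) eA eB g = g.
Proof. by rewrite (eq_irrelevance eA erefl) (eq_irrelevance eB erefl). Qed.

Section Tools.
Variables (R : comPzRingType) (C : smcat R).
Local Notation "f ∘ g" := (mcomp C f g) (at level 40, left associativity).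
Local Notation "f ⊗ g" := (mtens C f g) (at level 35).
Local Notation iu := (mid C up).
Local Notation id := (mid C dn).
Local Notation i0 := (mid C unit_obj).

Lemma tc A B D A' B' D' (f : mor C B D) (f' : mor C A B) (g : mor C B' D') (g' : mor C A' B') :
  (f ⊗ g) ∘ (f' ⊗ g') = (f ∘ f') ⊗ (g ∘ g').
Proof. exact: tens_comp. Qed.

Lemma xl A B A' B' (f : mor C A B) (g : mor C A' B') : f ⊗ g = (f ⊗ mid C B') ∘ (mid C A ⊗ g).
Proof. by rewrite tc comp1m compm1. Qed.
Lemma xr A B A' B' (f : mor C A B) (g : mor C A' B') : f ⊗ g = (mid C B ⊗ g) ∘ (f ⊗ mid C A').
Proof. by rewrite tc comp1m compm1. Qed.

Lemma comp0l A B D (g : mor C A B) : (0 : mor C B D) ∘ g = 0.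
Proof. by rewrite -(scale0r (0 : mor C B D)) compZl scale0r. Qed.
Lemma comp0r A B D (g : mor C B D) : g ∘ (0 : mor C A B) = 0.
Proof. by rewrite -(scale0r (0 : mor C A B)) compZr scale0r. Qed.
Lemma compNl A B D (f : mor C B D) (g : mor C A B) : (- f) ∘ g = - (f ∘ g).
Proof. by rewrite -scaleN1r compZl scaleN1r. Qed.
Lemma compNr A B D (f : mor C B D) (g : mor C A B) : f ∘ (- g) = - (f ∘ g).
Proof. by rewrite -scaleN1r compZr scaleN1r. Qed.
Lemma compBl A B D (f f' : mor C B D) (g : mor C A B) : (f - f') ∘ g = f ∘ g - f' ∘ g.
Proof. by rewrite compDl compNl. Qed.
Lemma compBr A B D (f : mor C B D) (g g' : mor C A B) : f ∘ (g - g') = f ∘ g - f ∘ g'.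
Proof. by rewrite compDr compNr. Qed.
Lemma tensNl A B A' B' (f : mor C A B) (g : mor C A' B') : (- f) ⊗ g = - (f ⊗ g).
Proof. by rewrite -scaleN1r tensZl scaleN1r. Qed.
Lemma tensNr A B A' B' (f : mor C A B) (g : mor C A' B') : f ⊗ (- g) = - (f ⊗ g).
Proof. by rewrite -scaleN1r tensZr scaleN1r. Qed.
Lemma tensBl A B A' B' (f f' : mor C A B) (g : mor C A' B') : (f - f') ⊗ g = f ⊗ g - f' ⊗ g.
Proof. by rewrite tensDl tensNl. Qed.
Lemma tensBr A B A' B' (f : mor C A B) (g g' : mor C A' B') : f ⊗ (g - g') = f ⊗ g - f ⊗ g'.
Proof. by rewrite tensDr tensNr. Qed.

Lemma comp_suml A B D n (F : 'I_n -> mor C B D) (g : mor C A B) :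
  (\sum_(i < n) F i) ∘ g = \sum_(i < n) (F i ∘ g).
Proof.
elim: n F => [|n IH] F; first by rewrite !big_ord0 comp0l.
by rewrite !big_ord_recr /= compDl IH.
Qed.
Lemma comp_sumr A B D n (F : 'I_n -> mor C A B) (g : mor C B D) :
  g ∘ (\sum_(i < n) F i) = \sum_(i < n) (g ∘ F i).
Proof.
elim: n F => [|n IH] F; first by rewrite !big_ord0 comp0r.
by rewrite !big_ord_recr /= compDr IH.
Qed.

Lemma powS A (g : mor C A A) n : powm g n.+1 = g ∘ powm g n.
Proof. by []. Qed.
Lemma powSr A (g : mor C A A) n : powm g n.+1 = powm g n ∘ g.
Proof.
elim: n => [|n IH]; first by rewrite /powm /= comp1m compm1.
by rewrite [LHS]powS [in LHS]IH Defs.compA.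
Qed.
Lemma pow0 A (g : mor C A A) : powm g 0 = mid C A.
Proof. by []. Qed.

End Tools.


Section Diag.
Variables (R : comPzRingType) (C : smcat R).
Local Notation "f ∘ g" := (mcomp C f g) (at level 40, left associativity).
Local Notation "f ⊗ g" := (mtens C f g) (at level 35).
Local Notation iu := (mid C up).
Local Notation id := (mid C dn).
Local Notation i0 := (mid C unit_obj).
Variables (x : mor C up up) (s : mor C (up ++ up) (up ++ up))
  (c : mor C unit_obj (dn ++ up)) (d : mor C (up ++ dn) unit_obj).
Hypothesis Z1 : (d ⊗ iu) ∘ (iu ⊗ c) = iu.
Hypothesis Z2 : (id ⊗ d) ∘ (c ⊗ id) = id.

Lemma dd : d ∘ (mid C (up ++ dn) ⊗ d) = d ∘ (d ⊗ mid C (up ++ dn)).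
Proof.
have E : d ⊗ i0 = d by rewrite tens1r castHE.
have -> : d ∘ (mid C (up ++ dn) ⊗ d) = (d ⊗ i0) ∘ (mid C (up ++ dn) ⊗ d) by rewrite E.
have -> : d ∘ (d ⊗ mid C (up ++ dn)) = (i0 ⊗ d) ∘ (d ⊗ mid C (up ++ dn)) by rewrite tens1l.
by rewrite !tc !compm1 !comp1m.
Qed.

Lemma a_lem : d ∘ (iu ⊗ heis_x' x c d) = d ∘ (x ⊗ id).
Proof.
rewrite /heis_x'.
have -> : iu ⊗ ((id ⊗ d) ∘ ((id ⊗ (x ⊗ id)) ∘ (c ⊗ id))) =
   (iu ⊗ (id ⊗ d)) ∘ ((iu ⊗ (id ⊗ (x ⊗ id))) ∘ (iu ⊗ (c ⊗ id))) by rewrite !tc !comp1m.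
have E1 : (iu ⊗ id) ⊗ d = iu ⊗ (id ⊗ d) by rewrite tensA castHE.
rewrite -E1 tens_id (Defs.compA d) dd -(Defs.compA d).
have E2 : (d ⊗ iu) ⊗ id = d ⊗ (iu ⊗ id) by rewrite tensA castHE.
rewrite -tens_id -E2.
have E3 : ((iu ⊗ id) ⊗ x) ⊗ id = iu ⊗ (id ⊗ (x ⊗ id)) by rewrite tensA castHE tensA castHE.
have E4 : (iu ⊗ c) ⊗ id = iu ⊗ (c ⊗ id) by rewrite tensA castHE.
rewrite -E3 -E4.
change (d ∘ (((d ⊗ iu) ⊗ id) ∘ ((((iu ⊗ id) ⊗ x) ⊗ id) ∘ ((iu ⊗ c) ⊗ id))) = d ∘ (x ⊗ id)).
rewrite !tc !comp1m (Defs.compA (d ⊗ iu)).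
have -> : (d ⊗ iu) ∘ ((iu ⊗ id) ⊗ x) = x ∘ (d ⊗ iu).
  by rewrite tc tens_id compm1 comp1m xr tens1l.
by rewrite -Defs.compA Z1 compm1. Qed.

Lemma cc : (c ⊗ mid C (dn ++ up)) ∘ c = (mid C (dn ++ up) ⊗ c) ∘ c.
Proof.
have E : c ⊗ i0 = c by rewrite tens1r castHE.
have -> : (c ⊗ mid C (dn ++ up)) ∘ c = (c ⊗ mid C (dn ++ up)) ∘ (i0 ⊗ c) by rewrite tens1l.
have -> : (mid C (dn ++ up) ⊗ c) ∘ c = (mid C (dn ++ up) ⊗ c) ∘ (c ⊗ i0) by rewrite E.
by rewrite !tc !compm1 !comp1m.
Qed.

Lemma b_lem : (heis_x' x c d ⊗ iu) ∘ c = (id ⊗ x) ∘ c.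
Proof.
rewrite /heis_x'.
have -> : ((id ⊗ d) ∘ ((id ⊗ (x ⊗ id)) ∘ (c ⊗ id))) ⊗ iu =
   ((id ⊗ d) ⊗ iu) ∘ (((id ⊗ (x ⊗ id)) ⊗ iu) ∘ ((c ⊗ id) ⊗ iu)) by rewrite !tc !comp1m.
have F1 : (c ⊗ id) ⊗ iu = c ⊗ (id ⊗ iu) by rewrite tensA castHE.
have F2 : (id ⊗ d) ⊗ iu = id ⊗ (d ⊗ iu) by rewrite tensA castHE.
have F3 : (id ⊗ (x ⊗ id)) ⊗ iu = id ⊗ ((x ⊗ id) ⊗ iu) by rewrite tensA castHE.
have F4 : (id ⊗ iu) ⊗ c = id ⊗ (iu ⊗ c) by rewrite tensA castHE.
have F5 : (x ⊗ id) ⊗ iu = x ⊗ (id ⊗ iu) by rewrite tensA castHE.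
rewrite F1 (tens_id C dn up) -!Defs.compA cc -(tens_id C dn up) F2 F3 F4.
change ((id ⊗ (d ⊗ iu)) ∘ ((id ⊗ ((x ⊗ id) ⊗ iu)) ∘ ((id ⊗ (iu ⊗ c)) ∘ c)) = (id ⊗ x) ∘ c).
rewrite (Defs.compA (id ⊗ ((x ⊗ id) ⊗ iu))) tc comp1m F5 (tens_id C dn up).
have -> : (x ⊗ mid C (dn ++ up)) ∘ (iu ⊗ c) = (iu ⊗ c) ∘ x.
  by rewrite tc comp1m compm1 xr tens1r castHE.
by rewrite Defs.compA tc comp1m Defs.compA Z1 comp1m.
Qed.

Definition Kt (g : mor C (up ++ up) (up ++ up)) : mor C (up ++ dn) (dn ++ up) :=
  (id ⊗ (iu ⊗ d)) ∘ ((id ⊗ (g ⊗ id)) ∘ (c ⊗ (iu ⊗ id))).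

Lemma KtE : heis_t s c d = Kt s.
Proof. by []. Qed.

Lemma Kt_id : Kt (mid C (up ++ up)) = c ∘ d.
Proof.
rewrite /Kt !tens_id comp1m.
have G : id ⊗ (iu ⊗ d) = mid C (dn ++ up) ⊗ d by rewrite -tens_id tensA castHE.
rewrite G.
change ((mid C (dn ++ up) ⊗ d) ∘ (c ⊗ mid C (up ++ dn)) = c ∘ d).
rewrite tc comp1m compm1.
have -> : c ∘ d = (c ⊗ i0) ∘ (i0 ⊗ d) by rewrite tens1l tens1r castHE.
by rewrite tc compm1 comp1m.
Qed.

Lemma Kt_lin (g h : mor C (up ++ up) (up ++ up)) : Kt (g - h) = Kt g - Kt h.
Proof. by rewrite /Kt tensBl tensBr compBl compBr. Qed.

Lemma Kt_opp (g : mor C (up ++ up) (up ++ up)) : Kt (- g) = - Kt g.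
Proof. by rewrite /Kt tensNl tensNr compNl compNr. Qed.

Lemma K1 g : Kt g ∘ (x ⊗ id) = Kt (g ∘ (iu ⊗ x)).
Proof.
rewrite /Kt -!Defs.compA.
have -> : (c ⊗ (iu ⊗ id)) ∘ (x ⊗ id) = (id ⊗ ((iu ⊗ x) ⊗ id)) ∘ (c ⊗ (iu ⊗ id)).
  have G : (id ⊗ iu) ⊗ (x ⊗ id) = id ⊗ ((iu ⊗ x) ⊗ id) by rewrite tensA castHE tensA castHE.
  have -> : (c ⊗ (iu ⊗ id)) ∘ (x ⊗ id) = (c ⊗ (iu ⊗ id)) ∘ (i0 ⊗ (x ⊗ id)) by rewrite tens1l.
  rewrite -G.
  change ((c ⊗ (iu ⊗ id)) ∘ (i0 ⊗ (x ⊗ id)) = ((id ⊗ iu) ⊗ (x ⊗ id)) ∘ (c ⊗ (iu ⊗ id))).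
  by rewrite !tc !comp1m !compm1 tens_id comp1m.
by rewrite (Defs.compA (id ⊗ (g ⊗ id))) tc comp1m tc compm1.
Qed.


Lemma K2 g : (id ⊗ x) ∘ Kt g = Kt ((x ⊗ iu) ∘ g).
Proof.
rewrite /Kt.
have S : x ∘ (iu ⊗ d) = (iu ⊗ d) ∘ ((x ⊗ iu) ⊗ id).
  have E : x ⊗ i0 = x by rewrite tens1r castHE.
  have E2 : (x ⊗ iu) ⊗ id = x ⊗ mid C (up ++ dn) by rewrite tensA castHE tens_id.
  rewrite E2 -[in LHS]E.
  change ((x ⊗ i0) ∘ (iu ⊗ d) = (iu ⊗ d) ∘ (x ⊗ mid C (up ++ dn))).
  by rewrite !tc !comp1m !compm1.
have H : (id ⊗ x) ∘ (id ⊗ (iu ⊗ d)) = (id ⊗ (iu ⊗ d)) ∘ (id ⊗ ((x ⊗ iu) ⊗ id)).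
  by rewrite !tc !comp1m S.
have E : id ⊗ (((x ⊗ iu) ∘ g) ⊗ id) = (id ⊗ ((x ⊗ iu) ⊗ id)) ∘ (id ⊗ (g ⊗ id)).
  by rewrite !tc !comp1m.
by rewrite (Defs.compA (id ⊗ x)) H E -!Defs.compA.
Qed.

Lemma K3 g : Kt g ∘ (iu ⊗ heis_x' x c d) = Kt ((iu ⊗ x) ∘ g).
Proof.
rewrite /Kt; set x' := heis_x' x c d.
have S1 : (c ⊗ (iu ⊗ id)) ∘ (iu ⊗ x') = (id ⊗ (mid C (up ++ up) ⊗ x')) ∘ (c ⊗ (iu ⊗ id)).
  have G : (id ⊗ iu) ⊗ (iu ⊗ x') = id ⊗ (mid C (up ++ up) ⊗ x').
    by rewrite -tens_id tensA castHE tensA castHE.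
  have -> : (c ⊗ (iu ⊗ id)) ∘ (iu ⊗ x') = (c ⊗ (iu ⊗ id)) ∘ (i0 ⊗ (iu ⊗ x')) by rewrite tens1l.
  rewrite -G.
  change ((c ⊗ (iu ⊗ id)) ∘ (i0 ⊗ (iu ⊗ x')) = ((id ⊗ iu) ⊗ (iu ⊗ x')) ∘ (c ⊗ (iu ⊗ id))).
  by rewrite !tc !comp1m !compm1 tens_id comp1m.
have S2 : (id ⊗ (g ⊗ id)) ∘ (id ⊗ (mid C (up ++ up) ⊗ x')) = (id ⊗ (mid C (up ++ up) ⊗ x')) ∘ (id ⊗ (g ⊗ id)).
  by rewrite !tc !comp1m !compm1.
have S3 : (id ⊗ (iu ⊗ d)) ∘ (id ⊗ (mid C (up ++ up) ⊗ x')) = (id ⊗ (iu ⊗ d)) ∘ (id ⊗ ((iu ⊗ x) ⊗ id)).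
  rewrite !tc !comp1m.
  have G1 : mid C (up ++ up) ⊗ x' = iu ⊗ (iu ⊗ x') by rewrite -tens_id tensA castHE.
  have G2 : (iu ⊗ x) ⊗ id = iu ⊗ (x ⊗ id) by rewrite tensA castHE.
  rewrite G1 G2.
  change (id ⊗ ((iu ⊗ d) ∘ (iu ⊗ (iu ⊗ x'))) = id ⊗ ((iu ⊗ d) ∘ (iu ⊗ (x ⊗ id)))).
  by rewrite !tc !comp1m a_lem.
have E : id ⊗ (((iu ⊗ x) ∘ g) ⊗ id) = (id ⊗ ((iu ⊗ x) ⊗ id)) ∘ (id ⊗ (g ⊗ id)).
  by rewrite !tc !comp1m.
rewrite E -!Defs.compA S1 (Defs.compA (id ⊗ (g ⊗ id))) S2 -Defs.compA.
by rewrite (Defs.compA (id ⊗ (iu ⊗ d))) S3 -!Defs.compA.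
Qed.

Lemma K4 g : (heis_x' x c d ⊗ iu) ∘ Kt g = Kt (g ∘ (x ⊗ iu)).
Proof.
rewrite /Kt; set x' := heis_x' x c d.
pose M := mid C (up ++ (up ++ dn)).
have T1 : (x' ⊗ iu) ∘ (id ⊗ (iu ⊗ d)) = (id ⊗ (iu ⊗ d)) ∘ (x' ⊗ M).
  by rewrite !tc !comp1m !compm1.
have T2 : (x' ⊗ M) ∘ (id ⊗ (g ⊗ id)) = (id ⊗ (g ⊗ id)) ∘ (x' ⊗ M).
  by rewrite !tc !comp1m !compm1.
have T3 : (x' ⊗ M) ∘ (c ⊗ (iu ⊗ id)) = (id ⊗ ((x ⊗ iu) ⊗ id)) ∘ (c ⊗ (iu ⊗ id)).
  have G1 : (x' ⊗ iu) ⊗ mid C (up ++ dn) = x' ⊗ M by rewrite tensA castHE tens_id.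
  have G2 : (id ⊗ x) ⊗ mid C (up ++ dn) = id ⊗ ((x ⊗ iu) ⊗ id).
    by rewrite tensA castHE tensA castHE tens_id.
  rewrite -G1 -G2.
  change (((x' ⊗ iu) ⊗ mid C (up ++ dn)) ∘ (c ⊗ (iu ⊗ id)) = ((id ⊗ x) ⊗ mid C (up ++ dn)) ∘ (c ⊗ (iu ⊗ id))).
  by rewrite !tc b_lem.
have E : id ⊗ ((g ∘ (x ⊗ iu)) ⊗ id) = (id ⊗ (g ⊗ id)) ∘ (id ⊗ ((x ⊗ iu) ⊗ id)).
  by rewrite !tc !comp1m.
rewrite E (Defs.compA (x' ⊗ iu)) T1 -(Defs.compA (id ⊗ (iu ⊗ d)) (x' ⊗ M)) (Defs.compA (x' ⊗ M)) T2.
by rewrite -!Defs.compA T3.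
Qed.

Hypothesis Hss : s ∘ s = mid C (up ++ up).
Hypothesis Hdot : (x ⊗ iu) ∘ s - s ∘ (iu ⊗ x) = mid C (up ++ up).

Lemma Hdot2 : (iu ⊗ x) ∘ s - s ∘ (x ⊗ iu) = - mid C (up ++ up).
Proof.
apply/eqP; rewrite -subr_eq0 opprK; apply/eqP.
have -> : (iu ⊗ x) ∘ s - s ∘ (x ⊗ iu) + mid C (up ++ up) =
   - (s ∘ (((x ⊗ iu) ∘ s - s ∘ (iu ⊗ x)) ∘ s)) + s ∘ s.
  rewrite compBl compBr -(Defs.compA (x ⊗ iu) s s) Hss compm1.
  by rewrite -(Defs.compA s (iu ⊗ x) s) (Defs.compA s s) Hss comp1m opprB.
by rewrite Hdot comp1m addNr.
Qed.

Lemma Trel1 : heis_t s c d ∘ (x ⊗ id) - (id ⊗ x) ∘ heis_t s c d = - (c ∘ d).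
Proof.
rewrite KtE K1 K2 -Kt_lin -opprB Hdot Kt_opp Kt_id //.
Qed.

Lemma Trel2 : heis_t s c d ∘ (iu ⊗ heis_x' x c d) - (heis_x' x c d ⊗ iu) ∘ heis_t s c d = - (c ∘ d).
Proof.
by rewrite KtE K3 K4 -Kt_lin Hdot2 Kt_opp Kt_id.
Qed.
End Diag.


Section Abs.
Variables (R : comPzRingType) (C : smcat R).
Local Notation "f ∘ g" := (mcomp C f g) (at level 40, left associativity).
Local Notation "f ⊗ g" := (mtens C f g) (at level 35).
Local Notation iu := (mid C up).
Local Notation id := (mid C dn).
Local Notation i0 := (mid C unit_obj).
Variables (x : mor C up up) (s : mor C (up ++ up) (up ++ up))
  (c : mor C unit_obj (dn ++ up)) (d : mor C (up ++ dn) unit_obj)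
  (tau : mor C (dn ++ up) (up ++ dn))
  (e : nat -> mor C unit_obj (up ++ dn))
  (f : nat -> mor C (dn ++ up) unit_obj) (k : int).
Hypothesis rels : heis_rels x s c d tau e f k.
Local Notation t := (heis_t s c d).
Local Notation c' := (heis_c' x c tau e k).
Local Notation d' := (heis_d' x d tau f k).
Definition dr r := d ∘ (powm x r ⊗ id).
Definition cr r := (id ⊗ powm x r) ∘ c.

Definition Pair (A : mor C (up ++ dn) (up ++ dn)) (B : mor C (dn ++ up) (dn ++ up)) :=
  [/\ t ∘ A - B ∘ t = - (c ∘ d), forall r, dr r ∘ A = dr r.+1 & forall r, B ∘ cr r = cr r.+1].

Lemma dr0 : dr 0 = d.
Proof. by rewrite /dr pow0 tens_id compm1. Qed.
Lemma cr0 : cr 0 = c.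
Proof. by rewrite /cr pow0 tens_id comp1m. Qed.

Lemma Bt A B : Pair A B -> B ∘ t = t ∘ A + c ∘ d.
Proof.
case=> P1 _ _.
have -> : B ∘ t = t ∘ A - (t ∘ A - B ∘ t) by rewrite opprB addrC subrK.
by rewrite P1 opprK.
Qed.


Lemma claim_i A B : Pair A B -> tau ∘ B - A ∘ tau = c' ∘ d'.
Proof.
move=> P_A_B; have Bt' := @Bt A B P_A_B; case: P_A_B => P1 P2 P3.
move: rels; rewrite /heis_c' /heis_d'.
case=> [[Hss Hyb Hdot Z1 Z2]].
case: k => n [I1 I2 I3 I4 I5].
- have I1' : tau ∘ t = mid C (up ++ dn) - \sum_(r < n) e r ∘ dr r by rewrite -I1 addrK.
  have F : tau ∘ B - A ∘ tau = tau ∘ (c ∘ (d ∘ tau)) - \sum_(r < n) e r ∘ (dr r.+1 ∘ tau).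
    have -> : tau ∘ B = tau ∘ ((B ∘ t) ∘ tau) by rewrite -Defs.compA I2 compm1.
    rewrite Bt' compDl compDr -(Defs.compA t A) (Defs.compA tau t) I1' compBl comp1m comp_suml.
    under eq_bigr => r _ do rewrite -(Defs.compA (e r) (dr r)) (Defs.compA (dr r) A) P2.
    rewrite -!Defs.compA.
    by rewrite addrAC (addrAC (A ∘ tau)) subrr add0r addrC.
  rewrite F; case: n I1 I2 I3 I4 I5 I1' F => [|m] I1 I2 I3 I4 I5 I1' F.
    rewrite big_ord0 subr0 (_ : (0 < Posz 0)%R = false) // (_ : (0 <= Posz 0)%R = true) //=.
    by rewrite (tens_id C dn up) (tens_id C up dn) comp1m comp1m Defs.compA.
  have Hd : d ∘ tau = 0 by have := I4 0 isT; rewrite pow0 tens_id compm1.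
  rewrite big_ord_recr /= big1 ?add0r; last first.
    by move=> i _; rewrite /dr I4 ?comp0r // ltnS ltn_ord.
  by rewrite Hd !comp0r sub0r compNl /dr -Defs.compA.
have I1' : t ∘ tau = mid C (dn ++ up) - \sum_(r < n.+1) cr r ∘ f r by rewrite -I1 addrK.
have tA : t ∘ A = B ∘ t - c ∘ d by rewrite -P1 addrC subrK.
have Hc : tau ∘ c = 0 by have := I3 0 isT; rewrite /= (tens_id C dn up) comp1m.
have -> : A ∘ tau = (tau ∘ t) ∘ (A ∘ tau) by rewrite I2 comp1m.
rewrite -Defs.compA (Defs.compA t A) tA compBl compBr -(Defs.compA B t tau) I1' !compBr compm1.
rewrite !comp_sumr.
under eq_bigr => r _ do rewrite (Defs.compA B (cr r)) P3 (Defs.compA tau (cr r.+1)).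
rewrite -(Defs.compA c d tau) (Defs.compA tau c) Hc comp0l subr0 opprB addrC subrK.
rewrite big_ord_recr /= big1 ?add0r; last first.
  by move=> i _; rewrite /cr I3 ?comp0l // ltnS ltn_ord.
by rewrite Defs.compA.
Qed.

Definition Gd : mor C (dn ++ up) unit_obj :=
  match k with
  | Posz n => dr n.+1 ∘ tau + dr n ∘ (c' ∘ d')
  | Negz m => f m ∘ (c ∘ (d ∘ tau)) + \sum_(r < m.+1) (f m ∘ cr r.+1) ∘ f r
  end.

Lemma dB A B : Pair A B -> d' ∘ B = Gd.
Proof.
move=> PAB; have Ci := @claim_i A B PAB; have Bt' := @Bt A B PAB; case: PAB => P1 P2 P3.
have tB : tau ∘ B = A ∘ tau + c' ∘ d' by rewrite -Ci addrC subrK.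
move: rels tB Bt'; rewrite /Gd.
case=> [[Hss Hyb Hdot Z1 Z2]].
case: k => n [I1 I2 I3 I4 I5] tB Bt'.
- have E : heis_d' x d tau f (Posz n) = dr n ∘ tau by rewrite /heis_d' /= /dr Defs.compA.
  by rewrite {1}E -Defs.compA tB compDr Defs.compA P2.
- have -> : heis_d' x d tau f (Negz n) = f n by [].
  have -> : f n ∘ B = f n ∘ (B ∘ (t ∘ tau + \sum_(r < n.+1) cr r ∘ f r)) by rewrite I1 compm1.
  have Hf : f n ∘ t = 0 by apply: I4.
  rewrite compDr compDr (Defs.compA B t tau) Bt' compDl compDr -(Defs.compA t A tau).
  rewrite (Defs.compA (f n) t) Hf comp0l add0r -(Defs.compA c d tau) comp_sumr comp_sumr.
  under eq_bigr => r _ do rewrite (Defs.compA B (cr r)) P3 (Defs.compA (f n) (cr r.+1)).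
  by [].
Qed.

Lemma Ac_gen A B : Pair A B -> forall n0, c' = tau ∘ cr n0 ->
  A ∘ c' = tau ∘ cr n0.+1 - (c' ∘ d') ∘ cr n0.
Proof.
move=> PAB n0 Hc; have Ci := @claim_i A B PAB; case: PAB => P1 P2 P3.
have At : A ∘ tau = tau ∘ B - c' ∘ d' by rewrite -Ci opprB addrC subrK.
by rewrite {1}Hc Defs.compA At compBl -(Defs.compA tau B) P3.
Qed.

Definition Hc : mor C unit_obj (up ++ dn) :=
  match k with
  | Posz n.+1 => - (- (tau ∘ (c ∘ (d ∘ e n))) + \sum_(r < n.+1) e r ∘ (dr r.+1 ∘ e n))
  | Posz 0 => tau ∘ cr 1 - (c' ∘ d') ∘ cr 0
  | Negz m => tau ∘ cr m.+2 - (c' ∘ d') ∘ cr m.+1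
  end.

Lemma Ac A B : Pair A B -> A ∘ c' = Hc.
Proof.
move=> PAB; have G := @Ac_gen A B PAB; have Bt' := @Bt A B PAB; case: PAB => P1 P2 P3.
move: rels G Bt'; rewrite /Hc.
case=> [[Hss Hyb Hdot Z1 Z2]].
case: k => n [I1 I2 I3 I4 I5] G Bt'.
- case: n I1 I2 I3 I4 I5 G => [|n] I1 I2 I3 I4 I5 G.
    by apply: G.
  have -> : heis_c' x c tau e (Posz n.+1) = - e n by [].
  have tA : t ∘ A = B ∘ t - c ∘ d by rewrite -P1 addrC subrK.
  rewrite compNr; congr (- _).
  have -> : A ∘ e n = (tau ∘ t + \sum_(r < n.+1) e r ∘ dr r) ∘ (A ∘ e n) by rewrite I1 comp1m.
  rewrite compDl -Defs.compA (Defs.compA t A) tA compBl compDr -Defs.compA (I3 n (ltnSn n)).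
  rewrite !comp0r add0r compNr -(Defs.compA c d) comp_suml.
  under eq_bigr => r _ do rewrite -(Defs.compA (e r) (dr r)) (Defs.compA (dr r) A) P2.
  by [].
- by apply: G.
Qed.

End Abs.


Section Fin.
Variables (R : comPzRingType) (C : smcat R).
Local Notation "f ∘ g" := (mcomp C f g) (at level 40, left associativity).
Local Notation "f ⊗ g" := (mtens C f g) (at level 35).
Local Notation iu := (mid C up).
Local Notation id := (mid C dn).
Variables (x : mor C up up) (s : mor C (up ++ up) (up ++ up))
  (c : mor C unit_obj (dn ++ up)) (d : mor C (up ++ dn) unit_obj).
Hypothesis Z1 : (d ⊗ iu) ∘ (iu ⊗ c) = iu.
Hypothesis Hss : s ∘ s = mid C (up ++ up).
Hypothesis Hdot : (x ⊗ iu) ∘ s - s ∘ (iu ⊗ x) = mid C (up ++ up).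

Lemma pair1 : Pair R C x s c d (x ⊗ id) (id ⊗ x).
Proof.
split.
- exact: Trel1.
- move=> r; rewrite /dr -Defs.compA tc comp1m -powSr //.
- move=> r; rewrite /cr Defs.compA tc comp1m //.
Qed.

Lemma pair2 : Pair R C x s c d (iu ⊗ heis_x' x c d) (heis_x' x c d ⊗ iu).
Proof.
split.
- exact: Trel2.
- move=> r; rewrite /dr -Defs.compA.
  have -> : (powm x r ⊗ id) ∘ (iu ⊗ heis_x' x c d) = (iu ⊗ heis_x' x c d) ∘ (powm x r ⊗ id).
    by rewrite !tc !comp1m !compm1.
  by rewrite Defs.compA a_lem // -Defs.compA tc comp1m.
- move=> r; rewrite /cr Defs.compA.
  have -> : (heis_x' x c d ⊗ iu) ∘ (id ⊗ powm x r) = (id ⊗ powm x r) ∘ (heis_x' x c d ⊗ iu).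
    by rewrite !tc !comp1m !compm1.
  by rewrite -Defs.compA b_lem // Defs.compA tc comp1m -powSr.
Qed.
End Fin.

Theorem lemma2p2 (R : comPzRingType) (k : int) (C : smcat R)
  (x : mor C up up) (s : mor C (up ++ up) (up ++ up))
  (c : mor C unit_obj (dn ++ up)) (d : mor C (up ++ dn) unit_obj)
  (tau : mor C (dn ++ up) (up ++ dn))
  (e : nat -> mor C unit_obj (up ++ dn))
  (f : nat -> mor C (dn ++ up) unit_obj) :
  heis_rels x s c d tau e f k ->
  let x' := heis_x' x c d in
  let c' := heis_c' x c tau e k in
  let d' := heis_d' x d tau f k in
  [/\ mcomp C tau (mtens C x' (mid C up)) - mcomp C (mtens C (mid C up) x') tau
        = mcomp C c' d',
      mcomp C tau (mtens C (mid C dn) x) - mcomp C (mtens C x (mid C dn)) tau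
        = mcomp C c' d',
      mcomp C d' (mtens C (mid C dn) x) = mcomp C d' (mtens C x' (mid C up)) &
      mcomp C (mtens C x (mid C dn)) c' = mcomp C (mtens C (mid C up) x') c'].
Proof.
move=> rels x' c' d'.
have rels' := rels.
case: rels' => [[Hss Hyb Hdot Z1 Z2] _].
have P1 : Pair R C x s c d (mtens C x (mid C dn)) (mtens C (mid C dn) x) by apply: pair1.
have P2 : Pair R C x s c d (mtens C (mid C up) x') (mtens C x' (mid C up)) by apply: pair2.
split.
- exact: (@claim_i _ _ _ _ _ _ _ _ _ _ rels _ _ P2).
- exact: (@claim_i _ _ _ _ _ _ _ _ _ _ rels _ _ P1).
- by rewrite (@dB _ _ _ _ _ _ _ _ _ _ rels _ _ P1) (@dB _ _ _ _ _ _ _ _ _ _ rels _ _ P2).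
- by rewrite (@Ac _ _ _ _ _ _ _ _ _ _ rels _ _ P1) (@Ac _ _ _ _ _ _ _ _ _ _ rels _ _ P2).
Qed.
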